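(* For every $n\geq 0$, $$\sum_{m=0}^{2^{n}-1}x^{e(2m+1)}=H_{n+1}(x)-xH_n(x),$$ and consequently, for all integers $i,n\geq 0$ (with $e(-1,n):=0$), $$|\{m\in[0,2^{n}-1]\cap\mathbb{Z}:\;e(2m+1)=i\}|=e(i,n+1)-e(i-1,n).$$
   Context: The Stern polynomials $B_n(t)\in\mathbb{Z}[t]$ are defined by $B_0(t)=0$, $B_1(t)=1$, and for $n\geq 1$: $B_{2n}(t)=tB_n(t)$, $B_{2n+1}(t)=B_n(t)+B_{n+1}(t)$. For $n\geq1$ let $e(n)=\deg B_n(t)$. For $n\geq 0$ let $H_n(x)=\sum_{m=1}^{2^n}x^{e(m)}$, and for $i,n\geq 0$ let $e(i,n)=|\{m\in[1,2^n]\cap\mathbb{Z}:\;e(m)=i\}|$. *)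

(* Defs.v *)
From HB Require Import structures.
From mathcomp Require Import all_boot all_order all_algebra.
Set Implicit Arguments. Unset Strict Implicit. Unset Printing Implicit Defensive.
Import GRing.Theory.
Local Open Scope ring_scope.

(* Stern polynomials, computed with fuel k (fuel n suffices for B_n). *)
Fixpoint sternF (k n : nat) : {poly int} :=
  match k with
  | 0 => 0
  | k'.+1 =>
    if n == 0%N then 0
    else if n == 1%N then 1
    else if odd n then sternF k' n./2 + sternF k' (n./2).+1
    else 'X * sternF k' n./2
  end.

Definition stern (n : nat) : {poly int} := sternF n n.

Definition e (n : nat) : nat := (size (stern n)).-1.

Definition H (n : nat) : {poly int} := \sum_(1 <= m < (2 ^ n).+1) 'X^(e m).

Definition ecount (i n : nat) : nat := count (fun m => e m == i) (iota 1 (2 ^ n)).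

(* Main.v *)
Require Import Defs.
From HB Require Import structures.
From mathcomp Require Import all_boot all_order all_algebra.
From mathcomp Require Import zify.
Import Order.TTheory GRing.Theory Num.Theory.
Local Open Scope ring_scope.

Lemma sternF_fuel k1 k2 n : (n <= k1)%N -> (n <= k2)%N -> sternF k1 n = sternF k2 n.
Proof.
elim: k1 k2 n => [|k1 IH] [|k2] n /= h1 h2.
- by [].
- by move: h1; rewrite leqn0 => /eqP ->.
- by move: h2; rewrite leqn0 => /eqP ->.
case: eqP => // /eqP n0; case: eqP => // /eqP n1.
case: ifP => on.
  by rewrite (IH k2 n./2) ?(IH k2 (n./2).+1) //; lia.
by rewrite (IH k2 n./2) //; lia.
Qed.

Lemma sternF_pos k n (x : int) : (1 <= n <= k)%N -> 0 < x -> 0 < (sternF k n).[x].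
Proof.
elim: k n => [|k IH] n /= hn hx; first by lia.
case: eqP => [n0|/eqP n0]; first by lia.
case: eqP => [_|/eqP n1]; first by rewrite hornerC.
case: ifP => on.
  by rewrite hornerD addr_gt0 // IH //; lia.
by rewrite mulrC hornerMX mulr_gt0 // IH //; lia.
Qed.

Lemma stern_neq0 n : (1 <= n)%N -> stern n != 0.
Proof.
move=> hn; apply/eqP => h.
have := @sternF_pos n n 1; rewrite -/(stern n) h horner0 ltxx hn leqnn.
by move=> /(_ isT isT).
Qed.

Lemma sternF_S k n : sternF k.+1 n = if n == 0%N then 0
    else if n == 1%N then 1
    else if odd n then sternF k n./2 + sternF k (n./2).+1
    else 'X * sternF k n./2.
Proof. by []. Qed.

Lemma stern_even k : (1 <= k)%N -> stern (k.*2) = 'X * stern k.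
Proof.
move=> hk; rewrite /stern.
case E: k.*2 => [|m]; first by lia.
rewrite sternF_S -E.
have -> : (k.*2 == 0)%N = false by lia.
have -> : (k.*2 == 1)%N = false by lia.
rewrite odd_double doubleK; congr (_ * _); apply: sternF_fuel; lia.
Qed.

Lemma e_even k : (1 <= k)%N -> e (k.*2) = (e k).+1.
Proof.
move=> hk; rewrite /e stern_even // mulrC size_mulX ?stern_neq0 //.
have := stern_neq0 k hk; rewrite -size_poly_eq0; by case: size.
Qed.

Lemma sum_split (f : nat -> {poly int}) N :
  \sum_(1 <= m < (N.*2).+1) f m = \sum_(0 <= k < N) (f (2 * k).+1 + f (2 * k).+2).
Proof.
elim: N => [|N IH]; first by rewrite !big_geq.
rewrite doubleS big_nat_recr /=; last by lia.
rewrite big_nat_recr /=; last by lia. rewrite IH.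
rewrite big_nat_recr /=; last by lia.
rewrite addrA; have -> : (2 * N = N.*2)%N by lia. by [].
Qed.

Lemma part1 n : \sum_(0 <= m < 2 ^ n) 'X^(e (2 * m).+1) = H n.+1 - 'X * H n.
Proof.
rewrite /H expnS mul2n sum_split big_split /=.
have -> : \sum_(0 <= i < 2 ^ n) 'X^(e (2 * i).+2) =
   'X * \sum_(1 <= m < (2 ^ n).+1) ('X^(e m) : {poly int}).
  rewrite big_add1 /= mulr_sumr; apply: eq_bigr => i _.
  have -> : (2 * i).+2 = (i.+1).*2 by lia.
  by rewrite e_even // exprS.
by rewrite addrK.
Qed.

Lemma coef_sumX (a : nat -> nat) (s : seq nat) i :
  (\sum_(m <- s) ('X^(a m) : {poly int}))`_i = (count (fun m => a m == i) s)%:Z.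
Proof.
elim: s => [|x s IH]; first by rewrite big_nil coef0.
rewrite big_cons coefD IH coefXn /= PoszD; congr (_ + _).
by rewrite eq_sym; case: eqP.
Qed.

Theorem mainTheorem4 :
  (forall n : nat,
     \sum_(0 <= m < 2 ^ n) 'X^(e (2 * m).+1) = H n.+1 - 'X * H n)
  /\
  (forall i n : nat,
     ((count (fun m => e (2 * m).+1 == i) (iota 0 (2 ^ n)))%:Z : int)
     = (ecount i n.+1)%:Z - (match i with 0 => 0%N | i'.+1 => ecount i' n end)%:Z).
Proof.
split; first exact: part1.
move=> i n.
have := congr1 (fun p : {poly int} => p`_i) (part1 n).
rewrite /= coefB coefXM /H -!coef_sumX.
have hb k : \sum_(1 <= m < (2 ^ k).+1) ('X^(e m) : {poly int}) =
    \sum_(m <- iota 1 (2 ^ k)) 'X^(e m).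
  by rewrite /index_iota subSS subn0.
rewrite /index_iota subn0 !hb !coef_sumX => ->.
by case: i.
Qed.
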